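(* Let $\mu$ be a $\sigma$-finite signed measure on a measurable space $(\Omega,\mathcal B)$, and let $\Omega^+,\Omega^-$ be a Hahn decomposition for $\mu$ (disjoint measurable sets with union $\Omega$, $\mu\ge0$ on measurable subsets of $\Omega^+$, $\mu\le0$ on measurable subsets of $\Omega^-$). Writing $\operatorname{range}\lambda=\{\lambda(A):A\in\mathcal B\}$, we have $\operatorname{range}|\mu|=\operatorname{range}\mu-\mu(\Omega^-)$ if $\mu(\Omega^-)>-\infty$, and $\operatorname{range}|\mu|=-\operatorname{range}\mu+\mu(\Omega^+)$ if $\mu(\Omega^+)<+\infty$.
   Context: A $\sigma$-finite signed measure is a countably additive extended-real-valued set function vanishing on $\emptyset$, taking at most one of the values $\pm\infty$, whose total variation $|\mu|$ is $\sigma$-finite. For a set $S\subset\mathbb R\cup\{\pm\infty\}$ and real $c$, $S+c=\{s+c:s\in S\}$ and $-S=\{-s:s\in S\}$. *)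

(* Defs.v *)
From HB Require Import structures.
From mathcomp Require Import all_boot all_order all_algebra.
From mathcomp Require Import all_classical all_reals all_analysis.
Set Implicit Arguments. Unset Strict Implicit. Unset Printing Implicit Defensive.
Import Order.TTheory GRing.Theory Num.Theory.
Local Open Scope classical_set_scope.
Local Open Scope ring_scope.
Local Open Scope ereal_scope.

Definition signed_measure d (T : measurableType d) (R : realType)
    (mu : set T -> \bar R) : Prop :=
  [/\ mu set0 = 0,
      semi_sigma_additive mu &
      ~ ((exists2 A, measurable A & mu A = +oo) /\
         (exists2 B, measurable B & mu B = -oo))].

Definition tot_var d (T : measurableType d) (R : realType)
    (mu : set T -> \bar R) (A : set T) : \bar R :=
  ereal_sup [set s | exists (n : nat) (E : (set T)^nat),
     [/\ (forall i, measurable (E i)), trivIset `I_n E,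
         (A = \bigcup_(i in `I_n) E i) &
         s = \sum_(0 <= i < n) `| mu (E i) |]].

Definition sigma_finite_signed_measure d (T : measurableType d) (R : realType)
    (mu : set T -> \bar R) : Prop :=
  signed_measure mu /\ sigma_finite setT (tot_var mu).

Definition Hahn_decomp d (T : measurableType d) (R : realType)
    (mu : set T -> \bar R) (P N : set T) : Prop :=
  [/\ measurable P, measurable N, P `&` N = set0, P `|` N = setT &
    (forall A, measurable A -> A `<=` P -> 0 <= mu A) /\
    (forall A, measurable A -> A `<=` N -> mu A <= 0)].

Definition set_range d (T : measurableType d) (R : realType)
    (mu : set T -> \bar R) : set (\bar R) := [set mu A | A in measurable].

(* Main.v *)
Require Import Defs.
From HB Require Import structures.
From mathcomp Require Import all_boot all_order all_algebra.
From mathcomp Require Import all_classical all_reals all_analysis.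
From mathcomp Require Import ring.
Import Order.TTheory GRing.Theory Num.Theory.
Local Open Scope classical_set_scope.
Local Open Scope ring_scope.
Local Open Scope ereal_scope.

Section S.
Context (d : measure_display) (T : measurableType d) (R : realType)
    (mu : set T -> \bar R).
Hypothesis mu0 : mu set0 = 0.
Hypothesis samu : semi_sigma_additive mu.

Lemma add2 : semi_additive2 mu.
Proof. exact: semi_additiveW mu0 (semi_sigma_additive_is_additive mu0 samu). Qed.

Lemma fin_add n (G : (set T)^nat) : (forall i, measurable (G i)) ->
  trivIset `I_n G ->
  mu (\bigcup_(i in `I_n) G i) = \sum_(0 <= i < n) mu (G i).
Proof.
move=> mG tG.
pose F i := if (i < n)%N then G i else set0.
have mF : forall i, measurable (F i).
  by move=> i; rewrite /F; case: ifP.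
have tF : trivIset setT F.
  move=> i j _ _; rewrite /F; case: ifP => hi; case: ifP => hj;
    rewrite ?setI0 ?set0I; try by case.
  by apply: tG.
have := semi_sigma_additive_is_additive mu0 samu mF tF (n := n).
rewrite -bigcup_mkord.
have -> : \bigcup_(i in `I_n) F i = \bigcup_(i in `I_n) G i.
  by apply: eq_bigcupr => i /= hi; rewrite /F hi.
move=> ->; last first.
  by apply: bigcup_measurable => i _.
rewrite big_mkord; apply: eq_bigr => i _; by rewrite /F ltn_ord.
Qed.

Variables (P N : set T).
Hypotheses (mP : measurable P) (mN : measurable N) (PN0 : P `&` N = set0)
  (PNT : P `|` N = setT)
  (posP : forall A, measurable A -> A `<=` P -> 0 <= mu A)
  (negN : forall A, measurable A -> A `<=` N -> mu A <= 0).

Lemma splitPN E : measurable E -> mu E = mu (E `&` P) + mu (E `&` N).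
Proof.
move=> mE; rewrite -add2 //; first by rewrite -setIUr PNT setIT.
- exact: measurableI.
- exact: measurableI.
- by rewrite -setIUr PNT setIT.
- by rewrite setIACA PN0 !setI0.
Qed.

Lemma abs_le E : measurable E -> `|mu E| <= mu (E `&` P) + - mu (E `&` N).
Proof.
move=> mE; rewrite splitPN //.
apply: le_trans (lee_abs_add _ _) _.
rewrite gee0_abs ?lee0_abs //.
- by apply: negN; [exact: measurableI | exact: subIsetr].
- by apply: posP; [exact: measurableI | exact: subIsetr].
Qed.

Lemma tot_varE A : measurable A -> tot_var mu A = mu (A `&` P) - mu (A `&` N).
Proof.
move=> mA; apply/eqP; rewrite eq_le; apply/andP; split.
- apply: ge_ereal_sup => _ [n [E [mE tE AE ->]]].
  apply: (@le_trans _ _ (\sum_(0 <= i < n) (mu (E i `&` P) + - mu (E i `&` N)))).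
    by apply: lee_sum => i _; exact: abs_le.
  rewrite big_split /=.
  rewrite sumeN; last first.
    move=> i j _ _; rewrite /adde_def.
    have h k : mu (E k `&` N) == +oo = false.
      apply: lt_eqF; apply: (le_lt_trans _ (ltry 0%R)).
      by apply: negN; [exact: measurableI | exact: subIsetr].
    by rewrite h h andbF.
  rewrite AE !setI_bigcupl !fin_add //.
  + by move=> i; apply: measurableI.
  + exact: trivIset_setIr.
  + by move=> i; apply: measurableI.
  + exact: trivIset_setIr.
- apply: ereal_sup_ubound.
  exists 2%N, (fun i => if i == 0%N then A `&` P else if i == 1%N then A `&` N else set0).
  split.
  + move=> i; case: ifP => _; first exact: measurableI.
    case: ifP => _ //; exact: measurableI.
  + move=> [|[|i]] [|[|j]] //= hi hj [x] []; rewrite /= ?set0I ?setI0 //;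
      try (by case; move: hi hj; rewrite /= ?ltnS ?ltn0); try (by []).
    * move=> [_ Px] [_ Nx]; have : (P `&` N) x by []. by rewrite PN0.
    * move=> [_ Nx] [_ Px]; have : (P `&` N) x by []. by rewrite PN0.
  + apply/seteqP; split => x.
    * move=> Ax; have : (P `|` N) x by rewrite PNT.
      case=> [Px|Nx]; [exists 0%N => //| exists 1%N => //].
    * by move=> [[|[|i]]] //= _ [].
  + rewrite big_nat_recr //= big_nat_recr //= big_nil add0e.
    rewrite gee0_abs ?lee0_abs //.
    * by apply: negN; [exact: measurableI | exact: subIsetr].
    * by apply: posP; [exact: measurableI | exact: subIsetr].
Qed.
Lemma hPN x : ~ (P x /\ N x).
Proof. by move=> h; have : (P `&` N) x by []; rewrite PN0. Qed.
Lemma hcov x : P x \/ N x.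
Proof. by have : (P `|` N) x by rewrite PNT. Qed.

Ltac setsolve A := rewrite predeqE; let x := fresh "x" in intro x; rewrite /setI /setU /setD /setC /set0 /=;
  have := hPN x; have := hcov x; case: (pselect (A x)); tauto.

Lemma add2' X Y : measurable X -> measurable Y -> X `&` Y = set0 ->
  mu (X `|` Y) = mu X + mu Y.
Proof. by move=> mX mY XY; apply: add2 => //; exact: measurableU. Qed.

Lemma finN X : -oo < mu N -> measurable X -> X `<=` N -> mu X \is a fin_num.
Proof.
move=> hN mX XN; rewrite le0_fin_numE; last exact: negN.
apply: (lt_le_trans hN).
have -> : N = X `|` (N `\` X) by rewrite setDUK.
rewrite add2' //; last 2 first.
- exact: measurableD.
- by rewrite setDE setICA setICr setI0.
rewrite -[leRHS]adde0; apply: leeD => //.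
by apply: negN; [exact: measurableD | exact: subDsetl].
Qed.

Lemma finP X : mu P < +oo -> measurable X -> X `<=` P -> mu X \is a fin_num.
Proof.
move=> hP mX XP; rewrite ge0_fin_numE; last exact: posP.
apply: (le_lt_trans _ hP).
have -> : P = X `|` (P `\` X) by rewrite setDUK.
rewrite add2' //; last 2 first.
- exact: measurableD.
- by rewrite setDE setICA setICr setI0.
rewrite -[leLHS]adde0; apply: leeD => //.
by apply: posP; [exact: measurableD | exact: subDsetl].
Qed.

Lemma L1 (x : \bar R) (a c : R) : x + c%:E - (a%:E + c%:E) = x - a%:E.
Proof.
case: x => [r| |] //=; rewrite -!EFinD; congr (_%:E); ring.
Qed.

Lemma L2 (y : \bar R) (a c : R) : - (y + c%:E) + (a%:E + c%:E) = a%:E - y.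
Proof.
case: y => [r| |] //=; rewrite -!EFinD; congr (_%:E); ring.
Qed.

Lemma part1 : -oo < mu N ->
  set_range (tot_var mu) = [set x - mu N | x in set_range mu].
Proof.
move=> hN; apply/seteqP; split.
- move=> _ [A mA <-]; rewrite tot_varE //.
  exists (mu ((A `&` P) `|` (N `\` A))).
    exists ((A `&` P) `|` (N `\` A)) => //.
    by apply: measurableU; [exact: measurableI | exact: measurableD].
  have eN : mu N = mu (A `&` N) + mu (N `\` A).
    rewrite -add2'; [| exact: measurableI | exact: measurableD | setsolve A].
    by congr mu; setsolve A.
  rewrite add2'; [| exact: measurableI | exact: measurableD | setsolve A].
  have fa := finN _ hN (measurableI _ _ mA mN) (@subIsetr _ _ _).
  have fc := finN _ hN (measurableD mN mA) (@subDsetl _ _ _).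
  by rewrite eN -(fineK fa) -(fineK fc) L1.
- move=> _ [_ [B mB <-] <-].
  exists ((B `&` P) `|` (N `\` B)).
    by apply: measurableU; [exact: measurableI | exact: measurableD].
  rewrite tot_varE; last by apply: measurableU; [exact: measurableI | exact: measurableD].
  have e1 : ((B `&` P) `|` (N `\` B)) `&` P = B `&` P by setsolve B.
  have e2 : ((B `&` P) `|` (N `\` B)) `&` N = N `\` B by setsolve B.
  rewrite e1 e2.
  have eN : mu N = mu (N `\` B) + mu (B `&` N).
    rewrite -add2'; [| exact: measurableD | exact: measurableI | setsolve B].
    by congr mu; setsolve B.
  have fa := finN _ hN (measurableD mN mB) (@subDsetl _ _ _).
  have fc := finN _ hN (measurableI _ _ mB mN) (@subIsetr _ _ _).
  by rewrite eN (splitPN _ mB) -(fineK fa) -(fineK fc) L1.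
Qed.

Lemma part2 : mu P < +oo ->
  set_range (tot_var mu) = [set - x + mu P | x in set_range mu].
Proof.
move=> hP; apply/seteqP; split.
- move=> _ [A mA <-]; rewrite tot_varE //.
  exists (mu ((A `&` N) `|` (P `\` A))).
    exists ((A `&` N) `|` (P `\` A)) => //.
    by apply: measurableU; [exact: measurableI | exact: measurableD].
  have eP : mu P = mu (A `&` P) + mu (P `\` A).
    rewrite -add2'; [| exact: measurableI | exact: measurableD | setsolve A].
    by congr mu; setsolve A.
  rewrite add2'; [| exact: measurableI | exact: measurableD | setsolve A].
  have fa := finP _ hP (measurableI _ _ mA mP) (@subIsetr _ _ _).
  have fc := finP _ hP (measurableD mP mA) (@subDsetl _ _ _).
  by rewrite eP -(fineK fa) -(fineK fc) L2.
- move=> _ [_ [B mB <-] <-].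
  exists ((P `\` B) `|` (B `&` N)).
    by apply: measurableU; [exact: measurableD | exact: measurableI].
  rewrite tot_varE; last by apply: measurableU; [exact: measurableD | exact: measurableI].
  have e1 : ((P `\` B) `|` (B `&` N)) `&` P = P `\` B by setsolve B.
  have e2 : ((P `\` B) `|` (B `&` N)) `&` N = B `&` N by setsolve B.
  rewrite e1 e2.
  have eP : mu P = mu (P `\` B) + mu (B `&` P).
    rewrite -add2'; [| exact: measurableD | exact: measurableI | setsolve B].
    by congr mu; setsolve B.
  have fa := finP _ hP (measurableD mP mB) (@subDsetl _ _ _).
  have fc := finP _ hP (measurableI _ _ mB mP) (@subIsetr _ _ _).
  by rewrite eP (splitPN _ mB) (addeC (mu (B `&` P))) -(fineK fa) -(fineK fc) L2.
Qed.

End S.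

Theorem lemma1p2 (d : measure_display) (T : measurableType d) (R : realType)
    (mu : set T -> \bar R) (P N : set T) :
  sigma_finite_signed_measure mu ->
  Hahn_decomp mu P N ->
  (-oo < mu N ->
     set_range (tot_var mu) = [set x - mu N | x in set_range mu]) /\
  (mu P < +oo ->
     set_range (tot_var mu) = [set - x + mu P | x in set_range mu]).
Proof.
move=> [[mu0 samu _] _] [mP mN PN0 PNT [posP negN]]; split.
- exact: (@part1 d T R mu mu0 samu P N mP mN PN0 PNT posP negN).
- exact: (@part2 d T R mu mu0 samu P N mP mN PN0 PNT posP negN).
Qed.
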